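(* Let $\bar P=\prod_{x\in\mathbb Z}\bar P_x$ be a product probability measure on $\Omega=\mathbb R^{\mathbb Z}$ and suppose the law $\bar P_0$ of $\omega_0$ is symmetric ($\omega_0$ and $-\omega_0$ have the same distribution). Then for every $n\ge0$ and $x\in\mathbb Z$, $$\mathbb P_n(X_n=x)=P^{\mathbf 0}_n(X_n=x),$$ where $\mathbb P_n(X_n=x)=\int_\Omega P^{\omega}_n(X_n=x)\,\bar P(d\omega)$ and $P^{\mathbf 0}_n$ is the quenched law for $\omega\equiv0$ (the Hadamard walk started from $\varphi_*$).
   Context: $U_x=\frac{1}{\sqrt2}\begin{pmatrix} e^{i\omega_x} & 1\\ 1 & -e^{-i\omega_x}\end{pmatrix}=\begin{pmatrix} a_x & b_x\\ c_x & d_x\end{pmatrix}$, $P_x=\begin{pmatrix} a_x & b_x\\ 0&0\end{pmatrix}$, $Q_x=\begin{pmatrix} 0&0\\ c_x & d_x\end{pmatrix}$. $\Xi_0(0,0)=I$, $\Xi_n(l,m)=0$ if $l<0$ or $m<0$, and $\Xi_{n+1}(l,m)=P_{x+1}\Xi_n(l-1,m)+Q_{x-1}\Xi_n(l,m-1)$ for $l,m\ge0$, $l+m=n+1$, $x=-l+m$. With $\varphi_*={}^T[1/\sqrt2,i/\sqrt2]$, $P^{\omega}_n(X_n=x)=\|\Xi_n(l,m)\varphi_*\|^2$ for $x=-l+m$, $n=l+m$, $l,m\ge0$ (zero otherwise). *)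

(* Defs.v *)
From HB Require Import structures.
From mathcomp Require Import all_boot all_order all_algebra.
From mathcomp Require Import all_classical all_reals all_analysis.
From mathcomp Require Import complex.
Set Implicit Arguments. Unset Strict Implicit. Unset Printing Implicit Defensive.
Import Order.TTheory GRing.Theory Num.Theory.
Local Open Scope classical_set_scope.
Local Open Scope ring_scope.

Section QW.
Variable R : realType.
Local Open Scope complex_scope.

Definition expi (t : R) : R[i] := (cos t) +i* (sin t).
Definition isqrt2 : R[i] := ((Num.sqrt 2)^-1)%:C.

Definition Umat (w : R) : 'M[R[i]]_2 :=
  \matrix_(i < 2, j < 2)
    (if (i == 0) && (j == 0) then expi w * isqrt2
     else if (i == 1) && (j == 1) then - (expi (- w)) * isqrt2
     else isqrt2).

Definition Pmat (w : R) : 'M[R[i]]_2 :=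
  \matrix_(i < 2, j < 2) (if i == 0 then Umat w i j else 0).
Definition Qmat (w : R) : 'M[R[i]]_2 :=
  \matrix_(i < 2, j < 2) (if i == 1 then Umat w i j else 0).

(* Xi_n(l,m); returns 0 when l + m <> n (the path-sum is only used for l+m = n) *)
Fixpoint Xi (om : int -> R) (n l m : nat) : 'M[R[i]]_2 :=
  match n with
  | 0 => if (l == 0)%N && (m == 0)%N then 1%:M else 0
  | n'.+1 =>
      if (l + m == n'.+1)%N then
        let x : int := (m%:Z - l%:Z)%R in
        (if (0 < l)%N then Pmat (om (x + 1)) *m Xi om n' l.-1 m else 0)
        + (if (0 < m)%N then Qmat (om (x - 1)) *m Xi om n' l m.-1 else 0)
      else 0
  end.

Definition phistar : 'cV[R[i]]_2 :=
  \col_(i < 2) (if i == 0 then isqrt2 else 'i * isqrt2).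

Definition sqnorm (z : R[i]) : R := let: a +i* b := z in a ^+ 2 + b ^+ 2.
Definition vnorm2 (v : 'cV[R[i]]_2) : R := \sum_(i < 2) sqnorm (v i 0).

(* quenched probability P^omega_n(X_n = x): the unique (l,m) with l+m=n, -l+m=x,
   or 0 if no such pair exists *)
Definition Pquenched (om : int -> R) (n : nat) (x : int) : R :=
  \sum_(l < n.+1)
     (if ((n - l)%:Z - l%:Z == x)%R then vnorm2 (Xi om n l (n - l) *m phistar)
      else 0).

End QW.

(* Omega = R^Z (an alias of int -> R, equipped with a trivial point so that the
   library's generated-sigma-algebra construction applies). *)
Definition RZ (R : realType) := (int -> R)%type.
HB.instance Definition _ (R : realType) := Choice.on (RZ R).
HB.instance Definition _ (R : realType) := isPointed.Build (RZ R) (fun=> 0%R).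

Definition cylinders (R : realType) : set (set (RZ R)) :=
  [set (fun om : RZ R => om x) @^-1` A | x in [set: int] & A in measurable].

Definition Omega (R : realType) := g_sigma_algebraType (@cylinders R).

Section Prod.
Variable R : realType.

(* P is the product measure prod_x mu_x: for every finite family of distinct
   sites and Borel sets, the joint probability factorizes. *)
Definition is_product_measure (P : probability (Omega R) R)
    (mu : int -> probability R R) : Prop :=
  forall (s : seq int) (A : int -> set R), uniq s ->
    (forall x, measurable (A x)) ->
    P [set om : Omega R | forall x, x \in s -> A x (om x)] =
    (\prod_(x <- s) mu x (A x))%E.

Definition symmetric_law (m : probability R R) : Prop :=
  forall A : set R, measurable A -> m ((fun r : R => - r) @^-1` A) = m A.

End Prod.

(* Main.v *)
Require Import Defs.
From HB Require Import structures.
From mathcomp Require Import all_boot all_order all_algebra.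
From mathcomp Require Import all_classical all_reals all_analysis.
From mathcomp Require Import complex ring lra zify.
From mathcomp Require Import measurable_realfun.
Import Order.TTheory GRing.Theory Num.Theory.
Local Open Scope classical_set_scope.
Local Open Scope ring_scope.
Section S.
Variable R : realType.
Local Open Scope complex_scope.
Lemma cmulE (a b c d : R) : (a +i* b) * (c +i* d) = (a*c - b*d) +i* (a*d + b*c).
Proof. by []. Qed.
Lemma caddE (a b c d : R) : (a +i* b) + (c +i* d) = (a+c) +i* (b+d).
Proof. by []. Qed.
Lemma coppE (a b : R) : - (a +i* b) = (-a) +i* (-b).
Proof. by []. Qed.
Lemma c0E : (0 : R[i]) = 0 +i* 0. Proof. by []. Qed.
Lemma c1E : (1 : R[i]) = 1 +i* 0. Proof. by []. Qed.
Lemma expiD (a b : R) : expi a * expi b = expi (a + b).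
Proof. rewrite /expi cmulE cosD sinD; congr (_ +i* _); ring. Qed.
Lemma expi0 : expi (0:R) = 1. Proof. by rewrite /expi cos0 sin0. Qed.
Lemma sqnorm_expi (a : R) z : sqnorm (expi a * z) = sqnorm z.
Proof.
case: z => x y; rewrite /expi cmulE /=.
have h := cos2Dsin2 a.
transitivity ((cos a ^+ 2 + sin a ^+ 2) * (x ^+ 2 + y ^+ 2)); first ring.
by rewrite h mul1r.
Qed.
Definition Mg (t w : R) : 'M[R[i]]_2 :=
  \matrix_(i < 2, j < 2) (if i == j then (if i == 0 then expi (- t) else expi (w - t)) else 0).
Lemma PM t w w' : Pmat w *m Mg (t + w) w = Mg t w' *m Pmat 0.
Proof.
apply/matrixP => i j; rewrite !mxE !big_ord_recl !big_ord0 !mxE.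
move: i j; do 2 case=> [[|[|//]] ?] /=; rewrite ?mxE /=.
all: try (rewrite ?mulr0 ?mul0r ?addr0 ?add0r //).
- by rewrite mulrAC expiD expi0 mul1r; congr (expi _ * _); ring.
- by rewrite mulrC; congr (expi _ * _); ring.
Qed.
Lemma QM t w w' : Qmat w *m Mg t w = Mg (t + w') w' *m Qmat 0.
Proof.
apply/matrixP => i j; rewrite !mxE !big_ord_recl !big_ord0 !mxE.
move: i j; do 2 case=> [[|[|//]] ?] /=; rewrite ?mxE /=.
all: try (rewrite ?mulr0 ?mul0r ?addr0 ?add0r //).
- by rewrite mulrC; congr (expi _ * _); ring.
- have -> : (w' - (t+w')) = -w + (w-t) by ring.
  by rewrite -(expiD (-w)) oppr0 expi0; ring.
Qed.

Lemma MgK w : Mg 0 w *m Mg 0 (- w) = 1%:M.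
Proof.
apply/matrixP => i j; rewrite !mxE !big_ord_recl !big_ord0 !mxE.
move: i j; do 2 case=> [[|[|//]] ?] /=; rewrite ?mxE /=.
all: rewrite ?mulr0 ?mul0r ?addr0 ?add0r ?oppr0 ?subr0 ?expi0 ?mulr1 //.
by rewrite !addr0 expiD subrr expi0.
Qed.

Definition theta (om : int -> R) (x : int) : R :=
 match x with
 | Posz k => \sum_(1 <= i < k.+1) om i%:Z
 | Negz k => - \sum_(0 <= i < k.+1) om (- i%:Z)
 end.

Lemma theta0 om : theta om 0 = 0.
Proof. by rewrite /= big_geq. Qed.

Lemma thetaS om x : theta om (x + 1) = theta om x + om (x + 1).
Proof.
case: x => k.
  by rewrite -PoszD addn1 /= big_nat_recr.
case: k => [|k].
  have -> : (Negz 0 + 1 = 0)%R by [].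
  by rewrite theta0 /= big_nat1 oppr0 addNr.
have -> : (Negz k.+1 + 1 = Negz k)%R by rewrite !NegzE; lia.
rewrite /= (big_nat_recr k.+1) //= NegzE.
ring.
Qed.
Lemma thetaP om x : theta om x = theta om (x - 1) + om x.
Proof. by rewrite -{1 3}(subrK 1 x) thetaS. Qed.

Lemma gauge om n l m : Xi om n l m =
  Mg (theta om (m%:Z - l%:Z)) (om (m%:Z - l%:Z)) *m Xi (fun=> 0) n l m *m Mg 0 (- om 0).
Proof.
elim: n l m => [|n IH] l m /=.
  case: ifP => [/andP[/eqP -> /eqP ->]|_]; last by rewrite mulmx0 mul0mx.
  by rewrite subrr theta0 mulmx1 MgK.
case: ifP => _; last by rewrite mulmx0 mul0mx.
rewrite mulmxDr mulmxDl; congr (_ + _).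
  case: l => [|l] /=; first by rewrite mulmx0 mul0mx.
  have hx : (m%:Z - l%:Z = (m%:Z - l.+1%:Z) + 1)%R by lia.
  rewrite IH hx !mulmxA thetaS (PM _ _ (om (m%:Z - l.+1%:Z))).
  by rewrite -!mulmxA.
case: m => [|m] /=; first by rewrite mulmx0 mul0mx.
have hx : (m%:Z - l%:Z = (m.+1%:Z - l%:Z) - 1)%R by lia.
rewrite IH hx !mulmxA [theta om (m.+1%:Z - l%:Z)]thetaP (QM _ _ (om (m.+1%:Z - l%:Z))).
by rewrite -!mulmxA.
Qed.
Lemma ImD (z w : R[i]) : complex.Im (z + w) = complex.Im z + complex.Im w.
Proof. by case: z; case: w. Qed.
Lemma ImM (z w : R[i]) : complex.Im z = 0 -> complex.Im w = 0 -> complex.Im (z * w) = 0.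
Proof. by case: z => a b; case: w => c d /= -> ->; rewrite !mulr0 !mul0r addr0. Qed.
Definition realmx (A : 'M[R[i]]_2) := forall i j, complex.Im (A i j) = 0.
Lemma realmxM A B : realmx A -> realmx B -> realmx (A *m B).
Proof.
move=> hA hB i j; rewrite !mxE !big_ord_recl big_ord0 !ImD !ImM //.
by rewrite !addr0.
Qed.
Lemma realmxD A B : realmx A -> realmx B -> realmx (A + B).
Proof. by move=> hA hB i j; rewrite !mxE ImD hA hB addr0. Qed.
Lemma realmx0 : realmx 0.
Proof. by move=> i j; rewrite mxE. Qed.
Lemma realmx1 : realmx 1%:M.
Proof. by move=> i j; rewrite mxE; case: (i == j). Qed.
Lemma realmxP : realmx (Pmat 0).
Proof.
move=> i j; rewrite !mxE.
by move: i j; do 2 case=> [[|[|//]] ?] /=; rewrite ?mxE /= ?sin0 ?mul0r ?mulr0 ?addr0.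
Qed.
Lemma realmxQ : realmx (Qmat 0).
Proof.
move=> i j; rewrite !mxE.
by move: i j; do 2 case=> [[|[|//]] ?] /=; rewrite ?mxE /= ?oppr0 ?sin0 ?mul0r ?mulr0 ?addr0 ?oppr0 ?mul0r ?add0r.
Qed.
Lemma realXi0 n l m : realmx (Xi (fun=> 0) n l m).
Proof.
elim: n l m => [|n IH] l m /=.
  by case: ifP => _; [exact: realmx1 | exact: realmx0].
case: ifP => _; last exact: realmx0.
apply: realmxD.
  case: (0 < l)%N; [exact: realmxM realmxP (IH _ _) | exact: realmx0].
case: (0 < m)%N; [exact: realmxM realmxQ (IH _ _) | exact: realmx0].
Qed.
Lemma vnorm2_Mg t w v : vnorm2 (Mg t w *m v) = vnorm2 v.
Proof.
rewrite /vnorm2 !big_ord_recl !big_ord0 !mxE !big_ord_recl !big_ord0 !mxE /=.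
by rewrite !mul0r !addr0 add0r !sqnorm_expi.
Qed.
Lemma realE (z : R[i]) : complex.Im z = 0 -> z = (complex.Re z) +i* 0.
Proof. by case: z => a b /= ->. Qed.
Definition Fn n l m w := vnorm2 (Xi (fun=> 0) n l m *m (Mg 0 (- w) *m phistar R)).
Definition Kn n l m := let A := Xi (fun _ : int => (0:R)) n l m in
  (Num.sqrt 2)^-1 ^+ 2 * 2 * (complex.Re (A ord0 ord0) * complex.Re (A ord0 (lift ord0 ord0)) + complex.Re (A (lift ord0 ord0) ord0) * complex.Re (A (lift ord0 ord0) (lift ord0 ord0))).
Lemma Fform n l m w : Fn n l m w = Fn n l m 0 + Kn n l m * sin w.
Proof.
rewrite /Fn /Kn /=.
have h := realXi0 n l m.
move: (Xi _ n l m) h => A h.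
rewrite /vnorm2.
do 3 (rewrite ?big_ord_recl ?big_ord0 ?mxE /=).
rewrite (realE _ (h ord0 ord0)) (realE _ (h ord0 (lift ord0 ord0))).
rewrite (realE _ (h (lift ord0 ord0) ord0)) (realE _ (h (lift ord0 ord0) (lift ord0 ord0))).
move: (complex.Re (A ord0 ord0)) (complex.Re (A ord0 (lift ord0 ord0))) (complex.Re (A (lift ord0 ord0) ord0)) (complex.Re (A (lift ord0 ord0) (lift ord0 ord0))) => a b c d.
rewrite /expi /isqrt2 /=.
rewrite ?oppr0 ?addr0 ?cos0 ?sin0 ?cosN ?sinN.
set r := (Num.sqrt 2)^-1.
have hc := cos2Dsin2 w.
apply/eqP; rewrite -subr_eq0; apply/eqP.
transitivity (r^+2 * (b^+2+d^+2) * (cos w ^+2 + sin w ^+2 - 1)); first ring.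
by rewrite hc subrr mulr0.
Qed.

Lemma vn_eq om n l m : vnorm2 (Xi om n l m *m phistar R) = Fn n l m (om 0).
Proof. by rewrite gauge -!mulmxA vnorm2_Mg /Fn. Qed.

Lemma Pq_form n x : exists C K : R, forall om : int -> R,
  Pquenched om n x = C + K * sin (om 0).
Proof.
exists (\sum_(l < n.+1) (if ((n - l)%:Z - l%:Z == x)%R then Fn n l (n - l) 0 else 0)).
exists (\sum_(l < n.+1) (if ((n - l)%:Z - l%:Z == x)%R then Kn n l (n - l) else 0)).
move=> om; rewrite /Pquenched mulr_suml -big_split; apply: eq_bigr => l _ /=.
by case: ifP => _; [rewrite vn_eq Fform | rewrite mul0r addr0].
Qed.

Lemma sqnorm_ge0 (z : R[i]) : 0 <= sqnorm z.
Proof. by case: z => a b /=; rewrite addr_ge0 // sqr_ge0. Qed.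

Lemma Pq_ge0 (om : int -> R) n x : 0 <= Pquenched om n x.
Proof.
rewrite /Pquenched sumr_ge0 // => l _; case: ifP => // _.
by rewrite /vnorm2 sumr_ge0 // => i _; exact: sqnorm_ge0.
Qed.
End S.

Theorem mainTheorem7 (R : realType) (P : probability (Omega R) R)
    (mu : int -> probability R R) :
  is_product_measure P mu ->
  symmetric_law (mu 0) ->
  forall (n : nat) (x : int),
    (\int[P]_(om in [set: Omega R]) (Pquenched om n x)%:E)%E =
    (Pquenched (fun=> 0) n x)%:E.
Proof.
move=> hP hsym n x.
have [C [K hf]] := Pq_form R n x.
pose g := fun t : R => C + K * sin t.
have g_ge0 : forall t, 0 <= g t.
  by move=> t; rewrite /g -(hf (fun=> t)); exact: Pq_ge0.
have gm : measurable_fun setT (EFin \o g).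
  apply/measurable_EFinP; rewrite /g.
  apply: (measurable_funD (f:=cst C) (g:=fun t => K * sin t)) => //.
  apply: (measurable_funM (f:=cst K) (g:=sin)) => //.
  apply: continuous_measurable_fun; exact: continuous_sin.
have nm : measurable_fun setT (fun t : R => - t).
  apply: continuous_measurable_fun; exact: opp_continuous.
have e0 : measurable_fun setT (fun om : Omega R => om 0).
  move=> _ B mB; rewrite setTI; apply: sub_sigma_algebra; exists 0 => //; exists B => //.
have push0 : forall A, measurable A ->
    pushforward P (fun om : Omega R => om 0) A = mu 0 A.
  move=> A mA; rewrite /pushforward.
  have := hP [:: 0] (fun=> A) erefl (fun=> mA); rewrite big_seq1 => <-.
  congr (P _); apply/seteqP; split => om /=.
    by move=> Ha y; rewrite mem_seq1 => /eqP ->.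
  by move=> h; apply: h; rewrite mem_seq1.
have eqI : (\int[P]_(om in [set: Omega R]) (Pquenched om n x)%:E =
           \int[mu (0:int)]_(t in [set: R]) (EFin \o g) t)%E.
  rewrite (eq_integral (fun om => ((EFin \o g) \o (fun om : Omega R => om (0:int))) om)); last first.
    by move=> om _; rewrite /= hf.
  rewrite -(preimage_setT (fun om : Omega R => om (0:int))) -ge0_integral_pushforward //; last first.
    by move=> t _; rewrite /= lee_fin.
  by apply: (eq_measure_integral (mu (0:int))) => A mA _; exact: push0.
have eqN : (\int[mu (0:int)]_(t in [set: R]) ((EFin \o g) \o (fun t : R => (- t)%R)) t =
           \int[mu (0:int)]_(t in [set: R]) (EFin \o g) t)%E.
  rewrite -(preimage_setT (fun t : R => (- t)%R)) -ge0_integral_pushforward //; last first.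
    by move=> t _; rewrite /= lee_fin.
  by apply: (eq_measure_integral (mu (0:int))) => A mA _; exact: hsym.
have hsum : (\int[mu (0:int)]_(t in [set: R]) (EFin \o g) t +
             \int[mu (0:int)]_(t in [set: R]) (EFin \o g) t = (C + C)%:E)%E.
  rewrite -{2}eqN -ge0_integralD //; first last.
  - exact: measurableT_comp gm nm.
  - by move=> t _; rewrite /= lee_fin.
  - by move=> t _; rewrite /= lee_fin.
  rewrite (eq_integral (fun=> (C + C)%:E)); last first.
    by move=> t _; rewrite /= -EFinD /g sinN; congr EFin; ring.
  rewrite integral_cst //; rewrite [X in (_ * X)%E](_ : _ = 1%E) ?mule1 //.
  exact: probability_setT.
apply: (eq_trans eqI); rewrite hf sin0 mulr0 addr0.
move: hsum; case: (\int[mu (0:int)]_(t in [set: R]) (EFin \o g) t)%E => [r||] //=.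
by move=> [h]; congr EFin; lra.
Qed.
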